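(* Let $m \ge 1$ and let $TW_{m+2}'$ be the commutator subgroup of the twin group $TW_{m+2}$. Then $TW_{m+2}'$ has the following presentation. Generators: $\beta_p(j)$ for all integers $0 \le p < j \le m$. Defining relations: for all integers $j,k,t,l$ with $1 \le k \le j$, $j+2 \le t \le m$ and $3 \le l \le t-j$, $$\beta_{j-k}(j)\,\beta_{t-(j+l)}(t) = \beta_{t-(j+l)}(t)\,\beta_{j-k}(j),$$ and for all integers $j,k,t$ with $1 \le k \le j$ and $j+2 \le t \le m$, $$\beta_{t-k}(t) = \beta_{j-k}(j)^{-1}\,\beta_{t-(j+1)}(t)\,\beta_{j-k}(j).$$ Here the abstract generator $\beta_p(j)$ corresponds to the element of $TW_{m+2}$ defined in the context.
   Context: For $n \ge 2$, the twin group $TW_n$ is the group with generators $\tau_1,\dots,\tau_{n-1}$ and defining relations $\tau_i^2=1$ for all $i$, and $\tau_i\tau_j=\tau_j\tau_i$ whenever $|i-j|>1$. (For $m\ge1$, $TW_{m+2}$ is isomorphic to Grothendieck's $m$-dimensional cartographical group.) $G'$ denotes the commutator subgroup of a group $G$. For $1 \le j \le n-2$ and $0 \le p < j$, define the element $$\beta_p(j) := \tau_{j-p}\tau_{j-p+1}\cdots\tau_{j-1}\,(\tau_{j+1}\tau_j\tau_{j+1}\tau_j)\,\tau_{j-1}\cdots\tau_{j-p+1}\tau_{j-p} \in TW_n,$$ so that $\beta_0(j)=\tau_{j+1}\tau_j\tau_{j+1}\tau_j$. *)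

(* Defs.v *)
From mathcomp Require Import all_boot.
Set Implicit Arguments. Unset Strict Implicit. Unset Printing Implicit Defensive.

(* A word over the alphabet A: letters (x, false) = x, (x, true) = x^-1. *)
Definition word (A : Type) := seq (A * bool).

Definition winv (A : Type) (w : word A) : word A :=
  rev (map (fun x => (x.1, ~~ x.2)) w).

Inductive wrel (A : Type) (R : word A -> word A -> Prop) : word A -> word A -> Prop :=
| wrel_refl w : wrel R w w
| wrel_sym u v : wrel R u v -> wrel R v u
| wrel_trans u v w : wrel R u v -> wrel R v w -> wrel R u w
| wrel_ctx l u v r : wrel R u v -> wrel R (l ++ u ++ r) (l ++ v ++ r)
| wrel_red x b : wrel R [:: (x, b); (x, ~~ b)] [::]
| wrel_rel u v : R u v -> wrel R u v.

(* Twin group TW_{m+2}: generator i : 'I_m.+1 stands for tau_(i+1),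
   i.e. tau_1, ..., tau_(m+1). *)
Definition TWrel (m : nat) (u v : word 'I_m.+1) : Prop :=
  (exists i : 'I_m.+1, u = [:: (i, false); (i, false)] /\ v = [::]) \/
  (exists i j : 'I_m.+1, (i.+1 < j \/ j.+1 < i) /\
     u = [:: (i, false); (j, false)] /\ v = [:: (j, false); (i, false)]).

Definition wcomm (A : Type) (g h : word A) : word A :=
  winv g ++ winv h ++ g ++ h.

Definition in_commTW (m : nat) (w : word 'I_m.+1) : Prop :=
  exists cs : seq (word 'I_m.+1 * word 'I_m.+1),
    wrel (@TWrel m) w (flatten [seq wcomm c.1 c.2 | c <- cs]).

Definition tau (m i : nat) : word 'I_m.+1 := [:: (inord i.-1, false)].

(* beta_p(j) = tau_{j-p} ... tau_{j-1} (tau_{j+1} tau_j tau_{j+1} tau_j)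
               tau_{j-1} ... tau_{j-p} *)
Definition beta (m p j : nat) : word 'I_m.+1 :=
  flatten [seq tau m (j - p + k) | k <- iota 0 p] ++
  tau m j.+1 ++ tau m j ++ tau m j.+1 ++ tau m j ++
  flatten [seq tau m (j - 1 - k) | k <- iota 0 p].

(* Abstract generators beta_p(j), 0 <= p < j <= m. *)
Definition Bgen (m : nat) := {x : nat * nat | (x.1 < x.2) && (x.2 <= m)}.

Definition wval (m : nat) (u : word (Bgen m)) : seq ((nat * nat) * bool) :=
  map (fun x => (val x.1, x.2)) u.

Definition Prel (m : nat) (u v : word (Bgen m)) : Prop :=
  (exists j k t l, [/\ 1 <= k <= j, j + 2 <= t <= m & 3 <= l <= t - j] /\
     wval u = [:: ((j - k, j), false); ((t - (j + l), t), false)] /\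
     wval v = [:: ((t - (j + l), t), false); ((j - k, j), false)]) \/
  (exists j k t, [/\ 1 <= k <= j & j + 2 <= t <= m] /\
     wval u = [:: ((t - k, t), false)] /\
     wval v = [:: ((j - k, j), true); ((t - (j + 1), t), false);
                  ((j - k, j), false)]).

Definition phi (m : nat) (u : word (Bgen m)) : word 'I_m.+1 :=
  flatten [seq (if x.2 then winv (beta m (val x.1).1 (val x.1).2)
                else beta m (val x.1).1 (val x.1).2) | x <- u].

(* Main.v *)
Require Import Defs.
From mathcomp Require Import all_boot zify.
From Stdlib Require Import FunctionalExtensionality Setoid Morphisms.
Set Implicit Arguments. Unset Strict Implicit. Unset Printing Implicit Defensive.


Section Generic.
Variables (A : Type) (R : word A -> word A -> Prop).
Local Notation "u ≈ v" := (wrel R u v) (at level 70).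
Implicit Types u v w l r : word A.

Lemma wcat u u' v v' : u ≈ u' -> v ≈ v' -> u ++ v ≈ u' ++ v'.
Proof.
move=> h1 h2; apply: (wrel_trans (v:=u' ++ v)); first exact: (wrel_ctx [::] v h1).
have := wrel_ctx u' [::] h2; by rewrite !cats0.
Qed.

Lemma wl l u v : u ≈ v -> l ++ u ≈ l ++ v.
Proof. by move=> h; apply: wcat => //; apply: wrel_refl. Qed.
Lemma wr r u v : u ≈ v -> u ++ r ≈ v ++ r.
Proof. by move=> h; apply: wcat => //; apply: wrel_refl. Qed.

Lemma wtr u v w : u ≈ v -> v ≈ w -> u ≈ w.
Proof. exact: wrel_trans. Qed.
Lemma wsym u v : u ≈ v -> v ≈ u.
Proof. exact: wrel_sym. Qed.

Lemma wcan x b : [:: (x, b); (x, ~~ b)] ≈ [::].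
Proof. exact: wrel_red. Qed.
Lemma wcan' x b : [:: (x, ~~ b); (x, b)] ≈ [::].
Proof. by have := wrel_red R x (~~ b); rewrite negbK. Qed.

Lemma winv_cat u v : winv (u ++ v) = winv v ++ winv u.
Proof. by rewrite /winv map_cat rev_cat. Qed.
Lemma winv_cons a u : winv (a :: u) = winv u ++ [:: (a.1, ~~ a.2)].
Proof. by rewrite -cat1s winv_cat. Qed.
Lemma winvK u : winv (winv u) = u.
Proof.
rewrite /winv map_rev revK -map_comp; rewrite -[RHS]map_id; apply: eq_map.
by case=> x b /=; rewrite negbK.
Qed.

Lemma wvinv w : w ++ winv w ≈ [::].
Proof.
elim: w => [|[x b] w IH] /=; first exact: wrel_refl.
rewrite winv_cons catA.
apply: wtr (wrel_ctx [:: (x,b)] [:: (x, ~~ b)] IH) _; exact: wcan.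
Qed.
Lemma winvv w : winv w ++ w ≈ [::].
Proof. by have := wvinv (winv w); rewrite winvK. Qed.

Lemma winv_wrel u v : u ≈ v -> winv u ≈ winv v.
Proof.
move=> h.
apply: wtr (_ : winv u ++ (v ++ winv v) ≈ _).
  by rewrite -{1}[winv u]cats0; apply: wl; apply: wsym; apply: wvinv.
apply: wtr (_ : winv u ++ (u ++ winv v) ≈ _).
  by apply: wl; apply: wr; apply: wsym.
by rewrite catA -{2}[winv v]cat0s; apply: wr; apply: winvv.
Qed.

Lemma wdel l r x b : l ++ [:: (x,b); (x, ~~ b)] ++ r ≈ l ++ r.
Proof. by have := wrel_ctx l r (wcan x b). Qed.
Lemma wdel' l r x b : l ++ [:: (x,~~ b); (x, b)] ++ r ≈ l ++ r.
Proof. by have := wrel_ctx l r (wcan' x b). Qed.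

Lemma comm_signs a b :
  [:: (a,false); (b,false)] ≈ [:: (b,false); (a,false)] ->
  forall e d, [:: (a,e); (b,d)] ≈ [:: (b,d); (a,e)].
Proof.
move=> h.
have h1 : forall d, [:: (a,false); (b,d)] ≈ [:: (b,d); (a,false)].
  case; last exact: h.
  (* a b^-1 ~ b^-1 b a b^-1 ~ b^-1 a b b^-1 ~ b^-1 a *)
  apply: wtr (_ : [:: (b,true)] ++ ([:: (b,false); (a,false)]) ++ [:: (b,true)] ≈ _).
    apply: wsym; exact: (wdel' [::] [:: (a,false); (b,true)] b false).
  apply: wtr (_ : [:: (b,true)] ++ ([:: (a,false); (b,false)]) ++ [:: (b,true)] ≈ _).
    by apply: wl; apply: wr; apply: wsym.
  exact: (wdel [:: (b,true); (a,false)] [::] b false).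
move=> e d; case: e; last exact: h1.
apply: wtr (_ : [:: (a,true)] ++ ([:: (b,d); (a,false)]) ++ [:: (a,true)] ≈ _).
  apply: wsym; exact: (wdel [:: (a,true); (b,d)] [::] a false).
apply: wtr (_ : [:: (a,true)] ++ ([:: (a,false); (b,d)]) ++ [:: (a,true)] ≈ _).
  by apply: wl; apply: wr; apply: wsym.
exact: (wdel' [::] [:: (b,d); (a,true)] a false).
Qed.

Lemma conj_signs a c d :
  [:: (c,false)] ≈ [:: (a,true); (d,false); (a,false)] ->
  forall s, [:: (a,true); (d,s)] ≈ [:: (c,s); (a,true)] /\
            [:: (a,false); (c,s)] ≈ [:: (d,s); (a,false)].
Proof.
move=> h s.
have hs : [:: (c,s)] ≈ [:: (a,true); (d,s); (a,false)].
  case: s; last exact: h.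
  by have := winv_wrel h; rewrite /winv /=.
split.
- apply: wtr (_ : [:: (a,true); (d,s)] ++ [:: (a,false); (a,true)] ≈ _).
    apply: wsym; exact: (wdel [:: (a,true); (d,s)] [::] a false).
  have -> : [:: (a,true); (d,s)] ++ [:: (a,false); (a,true)] =
            [:: (a,true); (d,s); (a,false)] ++ [:: (a,true)] by [].
  exact: (wr [:: (a,true)] (wsym hs)).
- apply: wtr (_ : [:: (a,false)] ++ [:: (a,true); (d,s); (a,false)] ≈ _).
    exact: (wl [:: (a,false)] hs).
  exact: (wdel [::] [:: (d,s); (a,false)] a false).
Qed.

End Generic.

#[global] Instance weq A R : Equivalence (@wrel A R).
Proof. split. exact: wrel_refl. exact: wrel_sym. exact: wrel_trans. Qed.
#[global] Instance wcatP A R : Proper (@wrel A R ==> @wrel A R ==> @wrel A R) (@cat _).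
Proof. move=> ? ? h ? ? h'; exact: wcat. Qed.
#[global] Instance wconsP A R : Proper (eq ==> @wrel A R ==> @wrel A R) (@cons _).
Proof. move=> a ? <- ? ? h'; exact: (wcat (wrel_refl R [:: a]) h'). Qed.



Section TW.
Variable m : nat.
Local Notation "u ≈ v" := (wrel (@TWrel m) u v) (at level 70).
Implicit Types u v w : word 'I_m.+1.

Definition L k : 'I_m.+1 * bool := ((inord k.-1 : 'I_m.+1), false).
Arguments L : simpl never.
Definition T (s : seq nat) : word 'I_m.+1 := [seq L k | k <- s].
Definition rng k := 0 < k <= m.+1.
Definition far (x y : nat) := (x.+1 < y) || (y.+1 < x).

Lemma T_cat s t : T (s ++ t) = T s ++ T t.
Proof. exact: map_cat. Qed.
Lemma T_rev s : T (rev s) = rev (T s).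
Proof. exact: map_rev. Qed.

Lemma tw_sq0 x : [:: (x,false); (x,false)] ≈ [::].
Proof. apply: wrel_rel; left; by exists x. Qed.

Lemma tw_pos x b : [:: (x,b)] ≈ [:: (x,false)].
Proof.
case: b; last exact: wrel_refl.
apply: wtr (_ : [:: (x,true)] ++ [:: (x,false); (x,false)] ≈ _).
  by apply: wsym; have := wl [:: (x,true)] (tw_sq0 x); rewrite cats0.
exact: (@wdel _ (@TWrel m) [::] [:: (x,false)] x true).
Qed.

Definition pos w := [seq (a.1, false) | a <- w].

Lemma pos_eq w : w ≈ pos w.
Proof.
elim: w => [|[x b] w IH]; first exact: wrel_refl.
exact: (wcat (tw_pos x b) IH).
Qed.

Lemma winv_pos w : winv w ≈ rev (pos w).
Proof.
apply: wtr (pos_eq _) _.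
by rewrite /pos /winv map_rev -map_comp; apply: wrel_refl.
Qed.

Lemma pos_T s : pos (T s) = T s.
Proof. by rewrite /pos /T -map_comp. Qed.

Lemma winv_T s : winv (T s) ≈ T (rev s).
Proof. by have := winv_pos (T s); rewrite pos_T T_rev. Qed.

Lemma T_canc s : T s ++ T (rev s) ≈ [::].
Proof.
apply: wtr (_ : T s ++ winv (T s) ≈ _); last exact: wvinv.
by apply: wl; apply: wsym; apply: winv_T.
Qed.
Lemma T_canc' s : T (rev s) ++ T s ≈ [::].
Proof. by have := T_canc (rev s); rewrite revK. Qed.

Lemma swap (x y : 'I_m.+1) b c : far x y -> [:: (x,b); (y,c)] ≈ [:: (y,c); (x,b)].
Proof.
move=> hf.
apply: wtr (_ : [:: (x,false)] ++ [:: (y,false)] ≈ _).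
  exact: (wcat (tw_pos x b) (tw_pos y c)).
apply: wtr (_ : [:: (y,false)] ++ [:: (x,false)] ≈ _); last first.
  exact: (wsym (wcat (tw_pos y c) (tw_pos x b))).
apply: wrel_rel; right; exists x, y; split => //.
by case/orP: hf; [left|right].
Qed.

Lemma far1 (a : 'I_m.+1 * bool) v : all (fun b : 'I_m.+1 * bool => far a.1 b.1) v -> [:: a] ++ v ≈ v ++ [:: a].
Proof.
elim: v => [|b v IH] /=; first by move=> _; apply: wrel_refl.
case/andP=> h1 h2.
apply: wtr (_ : [:: b; a] ++ v ≈ _).
  case: a b h1 {IH h2} => [x e] [y d] h1.
  exact: (wr v (swap e d h1)).
exact: (wl [:: b] (IH h2)).
Qed.

Lemma farw u v : all (fun a : 'I_m.+1 * bool => all (fun b : 'I_m.+1 * bool => far a.1 b.1) v) u -> u ++ v ≈ v ++ u.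
Proof.
elim: u => [|a u IH] /=; first by move=> _; rewrite cats0; apply: wrel_refl.
case/andP=> h1 h2.
apply: wtr (_ : [:: a] ++ (v ++ u) ≈ _); first exact: (wl [:: a] (IH h2)).
have -> : v ++ a :: u = (v ++ [:: a]) ++ u by rewrite -catA.
by rewrite catA; apply: wr; apply: far1.
Qed.

Lemma val_inord k : rng k -> ((inord k.-1 : 'I_m.+1) : nat) = k.-1.
Proof. by move=> /andP[h1 h2]; rewrite inordK //; lia. Qed.

Lemma farT s t : all rng s -> all rng t ->
  all (fun k => all (fun l => far k l) t) s -> T s ++ T t ≈ T t ++ T s.
Proof.
move=> hs ht hst; apply: farw.
rewrite all_map; apply/allP=> k ks /=.
rewrite all_map; apply/allP=> l lt /=; rewrite /L /=.
have /allP/(_ _ lt) := allP hst _ ks.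
rewrite /far !val_inord ?(allP hs _ ks) ?(allP ht _ lt) //.
have := allP hs _ ks; have := allP ht _ lt; rewrite /rng; lia.
Qed.


Lemma T_cons k s : T (k :: s) = L k :: T s. Proof. by []. Qed.

Lemma sqr k r : L k :: L k :: r ≈ r.
Proof. exact: (wr r (tw_sq0 _)). Qed.

Lemma swpr k l r : rng k -> rng l -> far k l -> L k :: L l :: r ≈ L l :: L k :: r.
Proof.
move=> hk hl hf.
have h : far (inord k.-1 : 'I_m.+1) (inord l.-1 : 'I_m.+1).
  rewrite /far !val_inord //; move: hf hk hl; rewrite /far /rng; lia.
exact: (wr r (swap false false h)).
Qed.

Lemma cancr s r : T s ++ T (rev s) ++ r ≈ r.
Proof. by rewrite catA; exact: (wr r (T_canc s)). Qed.
Lemma cancr' s r : T (rev s) ++ T s ++ r ≈ r.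
Proof. by rewrite catA; exact: (wr r (T_canc' s)). Qed.

Lemma bfar s t r : all rng s -> all rng t -> all (fun k => all (far k) t) s ->
  T s ++ T t ++ r ≈ T t ++ T s ++ r.
Proof. by move=> hs ht hst; rewrite !catA; apply: wr; apply: farT. Qed.

Lemma lfar k s r : rng k -> all rng s -> all (far k) s -> L k :: T s ++ r ≈ T s ++ L k :: r.
Proof. move=> hk hs hks; have := bfar (s:=[:: k]) (t:=s) r. rewrite /= hk hks. by apply. Qed.

Lemma flat_tau (g : nat -> nat) s : flatten [seq tau m (g k) | k <- s] = T [seq g k | k <- s].
Proof. by elim: s => //= k s ->. Qed.

Lemma map_sub_iota n c : n <= c -> [seq c - 1 - k | k <- iota 0 n] = rev (iota (c - n) n).
Proof.
elim: n => [//|n IH] hn.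
rewrite -[n.+1]addn1 iotaD map_cat IH; last lia.
have -> : c - (n + 1) = (c - n).-1 by lia.
have -> : iota (c - n).-1 (n + 1) = (c - n).-1 :: iota (c - n) n.
  by rewrite addn1 /=; congr (_ :: iota _ _); lia.
by rewrite rev_cons cats1 /=; congr (rcons _ _); lia.
Qed.

Lemma beta_T p j : p <= j -> beta m p j =
  T (iota (j-p) p) ++ L j.+1 :: L j :: L j.+1 :: L j :: T (rev (iota (j-p) p)).
Proof.
move=> hp; rewrite /beta !flat_tau map_sub_iota //.
have -> : [seq j - p + k | k <- iota 0 p] = iota (j - p) p.
  by rewrite -{2}[j - p]addn0 iotaDl.
by [].
Qed.

End TW.


Lemma allN (P : pred nat) s : (forall k : nat, k \in s -> P k) -> all P s.
Proof. by move=> h; apply/allP. Qed.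
Definition myMemE := (mem_cat, mem_rev, mem_iota, mem_filter, inE).
Ltac sidec := repeat (first [apply: allN => ? ; rewrite /= ?myMemE => ? | apply/andP; split]);
  rewrite /rng /far; lia.

Section P1.
Variable m : nat.
Local Notation "u ≈ v" := (wrel (@TWrel m) u v) (at level 70).
Local Notation T := (T m).
Local Notation L := (L m).

Definition bsq p j := iota (j-p) p ++ [:: j.+1; j; j.+1; j] ++ rev (iota (j-p) p).

Lemma beta_bseq p j : p <= j -> beta m p j = T (bsq p j).
Proof. by move=> h; rewrite beta_T // /bsq !T_cat. Qed.

Definition phiv (s : seq ((nat * nat) * bool)) : word 'I_m.+1 :=
  flatten [seq (if x.2 then winv (beta m x.1.1 x.1.2) else beta m x.1.1 x.1.2) | x <- s].

Lemma phi_wval (u : word (Bgen m)) : phi u = phiv (wval u).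
Proof. by rewrite /phi /phiv /wval -map_comp. Qed.

Lemma phi_cat (u v : word (Bgen m)) : phi (u ++ v) = phi u ++ phi v.
Proof. by rewrite /phi map_cat flatten_cat. Qed.

Lemma beta_comm p j q t : p < j -> q < t <= m -> j.+3 <= t - q ->
  beta m p j ++ beta m q t ≈ beta m q t ++ beta m p j.
Proof.
move=> h1 h2 h3; rewrite !beta_bseq; try lia.
apply: farT; rewrite /bsq; sidec.
Qed.

Lemma iota_split k j t : k <= j -> j.+2 <= t ->
  iota k (t - k) = iota k (j - k) ++ j :: j.+1 :: iota j.+2 (t - j.+2).
Proof.
move=> h1 h2.
have -> : t - k = (j - k) + (t - j) by lia.
rewrite iotaD; have -> : k + (j - k) = j by lia.
congr (_ ++ _).
have -> : t - j = (t - j.+2).+2 by lia.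
by rewrite /=; congr (_ :: _ :: iota _ _); lia.
Qed.

Lemma beta_conj j k t : 1 <= k <= j -> j.+2 <= t <= m ->
  beta m (t - k) t ≈ winv (beta m (j - k) j) ++ beta m (t - (j + 1)) t ++ beta m (j - k) j.
Proof.
move=> hk ht.
rewrite !beta_bseq; try lia.
rewrite /bsq.
have -> : t - (t - k) = k by lia.
have -> : j - (j - k) = k by lia.
have -> : t - (t - (j + 1)) = j.+1 by lia.
set Q := iota k (j - k).
set I := iota j.+2 (t - j.+2).
set D := iota j.+1 (t - (j + 1)) ++ [:: t.+1; t; t.+1; t] ++ rev (iota j.+1 (t - (j + 1))).
have hD : D = j.+1 :: (I ++ [:: t.+1; t; t.+1; t] ++ rev I) ++ [:: j.+1].
  rewrite /D /I; have -> : t - (j+1) = (t - j.+2).+1 by lia.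
  by rewrite /= rev_cons -cats1 -?catA.
have hIt : iota k (t - k) = Q ++ j :: j.+1 :: I by apply: iota_split; lia.
rewrite hIt.
rewrite -/D.
have hDr : all (rng m) D by rewrite hD /I; sidec.
have hDf : all (fun k => all (far k) D) (rev Q) by rewrite hD /I /Q; sidec.
clearbody D.
rewrite winv_T !rev_cat /= !revK.
rewrite ?T_cat -?catA /=.
rewrite ?rev_cons -?cats1 -?catA ?T_cat -?catA /=.
have hQr : all (rng m) (rev Q) by rewrite /Q; sidec.
rewrite (bfar (s := rev Q) (t := D)) //.
rewrite (@cancr' _ Q).
rewrite hD /= ?T_cat -?catA /=.
rewrite (sqr j.+1).
rewrite (sqr j.+1).
set E := I ++ [:: t.+1; t; t.+1; t] ++ rev I.
have hE : forall r, T I ++ L t.+1 :: L t :: L t.+1 :: L t :: T (rev I) ++ r = T E ++ r.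
  by move=> r; rewrite /E ?T_cat -?catA.
rewrite !hE.
rewrite (lfar (k := j) (s := E)); try (rewrite /E /I; sidec).
rewrite (sqr j).
reflexivity.
Qed.



Lemma prel_tw (u v : word (Bgen m)) : Prel u v -> phi u ≈ phi v.
Proof.
case=> [[j [k [t [l [[h1 h2 h3] [hu hv]]]]]] | [j [k [t [[h1 h2] [hu hv]]]]]];
  rewrite !phi_wval hu hv /phiv /= ?cats0.
- apply: beta_comm; lia.
- apply: beta_conj; lia.
Qed.

Lemma part1 (u v : word (Bgen m)) : wrel (@Prel m) u v -> phi u ≈ phi v.
Proof.
elim=> {u v}.
- move=> w; exact: wrel_refl.
- move=> u v _ h; exact: wsym.
- move=> u v w _ h1 _ h2; exact: wtr h1 h2.
- move=> l u v r _ h; rewrite !phi_cat; apply: wcat; first exact: wrel_refl.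
  by apply: wcat => //; exact: wrel_refl.
- move=> x b; rewrite /phi /=; case: b => /=; rewrite cats0.
  + exact: winvv.
  + exact: wvinv.
- move=> u v h; exact: prel_tw.
Qed.

End P1.


Definition flip (S : nat -> bool) i : nat -> bool := fun k => (k == i) (+) S k.

Fixpoint rl (S : nat -> bool) n :=
  if n is n'.+1 then (if S n then (rl S n').+1 else 0) else 0.

Lemma flipK S i : flip (flip S i) i = S.
Proof. apply: functional_extensionality => k; rewrite /flip addbA addbb. by []. Qed.
Lemma flipC S i j : flip (flip S i) j = flip (flip S j) i.
Proof. apply: functional_extensionality => k; rewrite /flip addbA (addbC (k == j)) -addbA. by []. Qed.
Lemma flip_ne S i k : k != i -> flip S i k = S k.
Proof. by rewrite /flip => /negbTE ->. Qed.
Lemma flip_eq S i : flip S i i = ~~ S i.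
Proof. by rewrite /flip eqxx. Qed.

Lemma rl_ext S S' n : (forall k, k <= n -> S k = S' k) -> rl S n = rl S' n.
Proof.
elim: n => [//|n IH] h /=.
rewrite h // IH // => k hk; apply: h; lia.
Qed.

Lemma rl_le S n : rl S n <= n.
Proof. elim: n => [//|n IH] /=; case: (S n.+1) => //; lia. Qed.

Lemma rl_cut S S' k n : S k = false -> S' k = false -> k <= n ->
  (forall l, k < l <= n -> S l = S' l) -> rl S n = rl S' n.
Proof.
move=> h1 h2; elim: n => [|n IH] hk h.
  by [].
case: (ltngtP k n.+1) => [hlt|hgt|e]; last first.
- by rewrite /= -e h1 h2.
- lia.
- rewrite /= h; last lia.
  have hk' : k <= n by lia.
  rewrite (IH hk') // => l hl; apply: h; lia.
Qed.

Lemma rl_stop S n : rl S n < n -> S (n - rl S n) = false.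
Proof.
elim: n => [//|n IH] /=.
case hS: (S n.+1) => /=.
- move=> h; have h' : rl S n < n by lia.
  have -> : n.+1 - (rl S n).+1 = n - rl S n by lia.
  exact: IH.
- by rewrite subn0.
Qed.

Lemma rl_in (S : nat -> bool) n l : n - rl S n < l <= n -> S l.
Proof.
elim: n => [|n IH] /=; first lia.
case hS: (S n.+1) => /= h; last lia.
case: (ltngtP l n.+1) => [hl| |->] //; last lia.
apply: IH; lia.
Qed.

Lemma rl_run (S : nat -> bool) a n : a <= n -> (forall l, a < l <= n -> S l) -> rl S n = (n - a) + rl S a.
Proof.
elim: n => [|n IH] ha h; first by have -> : a = 0 by lia.
case: (ltngtP a n.+1) => [hlt| |<-]; last by rewrite subnn.
- rewrite /= h; last lia.
  have ha' : a <= n by lia.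
  rewrite (IH ha'); first lia.
  move=> l hl; apply: h; lia.
- lia.
Qed.

Section RW.
Variable m : nat.
Local Notation "u ≈ v" := (wrel (@TWrel m) u v) (at level 70).
Local Notation "u ≈P v" := (wrel (@Prel m) u v) (at level 70).

Definition gen p j : option (Bgen m) := insub (p, j).

Definition gam S (x : 'I_m.+1) : word (Bgen m) :=
  if S x.+2 then (if gen (rl S x) x.+1 is Some b then [:: (b, S x.+1)] else [::]) else [::].

Fixpoint st S (w : word 'I_m.+1) := if w is a :: w' then st (flip S a.1.+1) w' else S.
Fixpoint rw S (w : word 'I_m.+1) : word (Bgen m) :=
  if w is a :: w' then gam S a.1 ++ rw (flip S a.1.+1) w' else [::].

Lemma st_cat S u v : st S (u ++ v) = st (st S u) v.
Proof. by elim: u S => //= a u IH S. Qed.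
Lemma rw_cat S u v : rw S (u ++ v) = rw S u ++ rw (st S u) v.
Proof. by elim: u S => //= a u IH S; rewrite IH catA. Qed.

Lemma gen_some p j : p < j <= m -> exists b, gen p j = Some b /\ val b = (p, j).
Proof.
move=> h; rewrite /gen; case: insubP => [b _ hv|]; first by exists b.
by rewrite /= h.
Qed.
Lemma gen_none p j : ~~ (p < j <= m) -> gen p j = None.
Proof. move=> h; rewrite /gen; case: insubP => [b hP _|//]. by rewrite /= hP in h. Qed.

Lemma Prel_comm (b1 b2 : Bgen m) p i q t : val b1 = (p, i) -> val b2 = (q, t) ->
  p < i -> i + 2 <= t <= m -> i + 3 <= t - q -> q < t ->
  [:: (b1,false); (b2,false)] ≈P [:: (b2,false); (b1,false)].
Proof.
move=> h1 h2 hp ht hq hqt; apply: wrel_rel; left.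
exists i, (i - p), t, (t - i - q); split; first (split; lia).
have e1 : i - (i - p) = p by lia.
have e2 : t - (i + (t - i - q)) = q by lia.
by rewrite /wval /= h1 h2 e1 e2.
Qed.

Lemma Prel_conj (a c d : Bgen m) p i pc pd t : val a = (p, i) -> val c = (pc, t) ->
  val d = (pd, t) -> pc = t - (i - p) -> pd = t - (i + 1) -> p < i -> i + 2 <= t <= m ->
  [:: (c,false)] ≈P [:: (a,true); (d,false); (a,false)].
Proof.
move=> ha hc hd hpc hpd hp ht; apply: wrel_rel; right.
exists i, (i - p), t; split; first (split; lia).
have e1 : i - (i - p) = p by lia.
by rewrite /wval /= ha hc hd e1 hpc hpd.
Qed.

Lemma gam_ext S S' (x : 'I_m.+1) : S x.+1 = S' x.+1 -> S x.+2 = S' x.+2 -> rl S x = rl S' x ->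
  gam S x = gam S' x.
Proof. by rewrite /gam => -> -> ->. Qed.

Lemma G1 S (x : 'I_m.+1) : gam S x ++ gam (flip S x.+1) x ≈P [::].
Proof.
rewrite /gam flip_ne; last lia.
rewrite flip_eq (@rl_ext (flip S x.+1) S); last first.
  by move=> k hk; rewrite flip_ne //; lia.
case: (S x.+2); last exact: wrel_refl.
case: (gen _ _) => [b|]; last exact: wrel_refl.
exact: wcan.
Qed.


Lemma G2 S (x y : 'I_m.+1) : x.+1 < y ->
  gam S x ++ gam (flip S x.+1) y ≈P gam S y ++ gam (flip S y.+1) x.
Proof.
move=> hxy.
have e1 : gam (flip S y.+1) x = gam S x.
  apply: gam_ext; [rewrite flip_ne //; lia | rewrite flip_ne //; lia |].
  apply: rl_ext => k hk; rewrite flip_ne //; lia.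
rewrite e1.
have fy1 : flip S x.+1 y.+1 = S y.+1 by rewrite flip_ne //; lia.
have fy2 : flip S x.+1 y.+2 = S y.+2 by rewrite flip_ne //; lia.
have hrx := rl_le S x.
case hx2: (S x.+2); last first.
  have -> : gam S x = [::] by rewrite /gam hx2.
  have -> : gam (flip S x.+1) y = gam S y.
    apply: gam_ext => //; apply: (@rl_cut _ _ x.+2) => //.
    1,2: try move=> ? ?; rewrite ?flip_ne //; lia.
  rewrite cats0; exact: wrel_refl.
case: (leqP (rl S y) (y - x.+2)) => hr.
- have hk : S (y - rl S y) = false by apply: rl_stop; lia.
  have hne : y - rl S y != x.+2 by apply/eqP => e; rewrite e hx2 in hk.
  have -> : gam (flip S x.+1) y = gam S y.
    apply: gam_ext => //; apply: (@rl_cut _ _ (y - rl S y)) => //.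
    1-3: try move=> ? ?; rewrite ?flip_ne //; lia.
  rewrite [gam S y]/gam.
  case hy2: (S y.+2); last by rewrite cats0; exact: wrel_refl.
  case: (leqP y.+1 m) => hym; last first.
    by rewrite gen_none /= ?cats0; [exact: wrel_refl | lia].
  have [b2 [-> hb2]] := @gen_some (rl S y) y.+1 ltac:(lia).
  have [b1 [hg1 hb1]] := @gen_some (rl S x) x.+1 ltac:(lia).
  rewrite /gam hx2 hg1 /=.
  apply: comm_signs; apply: (Prel_comm hb1 hb2); lia.
- have hin : forall l, x.+1 < l <= y -> S l.
    move=> l hl; apply: (rl_in (n := y)); lia.
  have hrun : rl S y = (y - x.+1) + rl S x.+1 by apply: rl_run; [lia | move=> l hl; apply: hin].
  have hrun' : rl (flip S x.+1) y = (y - x.+1) + rl (flip S x.+1) x.+1.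
    apply: rl_run; [lia | move=> l hl; rewrite flip_ne; [apply: hin; lia | lia]].
  have hfx : rl (flip S x.+1) x = rl S x.
    apply: rl_ext => k hk; rewrite flip_ne //; lia.
  rewrite [gam S y]/gam [gam (flip S x.+1) y]/gam fy1 fy2 hrun hrun' /= flip_eq hfx.
  case hy2: (S y.+2); last by rewrite cats0; exact: wrel_refl.
  case: (leqP y.+1 m) => hym; last first.
    by rewrite !gen_none /= ?cats0; [exact: wrel_refl | lia | lia].
  have [a [ga ha]] := @gen_some (rl S x) x.+1 ltac:(lia).
  rewrite [gam S x]/gam hx2 ga.
  case hx1: (S x.+1) => /=.
  + have [c [-> hc]] := @gen_some (y - x.+1 + (rl S x).+1) y.+1 ltac:(lia).
    have [d [-> hd]] := @gen_some (y - x.+1 + 0) y.+1 ltac:(lia).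
    apply: (conj_signs (Prel_conj ha hc hd _ _ _ _) (S y.+1)).1; lia.
  + have [c [-> hc]] := @gen_some (y - x.+1 + (rl S x).+1) y.+1 ltac:(lia).
    have [d [-> hd]] := @gen_some (y - x.+1 + 0) y.+1 ltac:(lia).
    apply: (conj_signs (Prel_conj ha hc hd _ _ _ _) (S y.+1)).2; lia.
Qed.

End RW.


Section RW2.
Variable m : nat.
Local Notation "u ≈ v" := (wrel (@TWrel m) u v) (at level 70).
Local Notation "u ≈P v" := (wrel (@Prel m) u v) (at level 70).

Lemma L2 (u v : word 'I_m.+1) : u ≈ v ->
  (forall S, rw S u ≈P rw S v) /\ (forall S, st S u = st S v).
Proof.
elim=> {u v}.
- by move=> w; split=> S; [exact: wrel_refl|].
- by move=> u v _ [h1 h2]; split=> S; [apply: wsym|].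
- move=> u v w _ [h1 h2] _ [h3 h4]; split=> S; [exact: wtr (h1 S) (h3 S)|].
  by rewrite h2 h4.
- move=> l u v r _ [h1 h2]; split=> S; rewrite ?rw_cat ?st_cat ?h2 //.
  apply: wcat; first exact: wrel_refl.
  by apply: wcat => //; exact: wrel_refl.
- move=> x b; split=> S /=; last by rewrite flipK.
  by rewrite cats0; apply: G1.
- move=> u v [[i [-> ->]] | [i [j [hij [-> ->]]]]]; split=> S /=.
  + by rewrite cats0; apply: G1.
  + by rewrite flipK.
  + rewrite !cats0; case: hij => h; first exact: G2.
    by apply: wsym; apply: G2.
  + by rewrite flipC.
Qed.

Definition pos' (w : word 'I_m.+1) := [seq (a.1, false) | a <- w].
Lemma rw_pos S w : rw S (pos' w) = rw S w.
Proof. by elim: w S => //= a w IH S; rewrite IH. Qed.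
Lemma st_pos S w : st S (pos' w) = st S w.
Proof. by elim: w S => //= a w IH S; rewrite IH. Qed.

Definition ind a b := fun k => a <= k < b.

Lemma fst_L k : rng m k -> ((L m k).1 : nat) = k.-1.
Proof. by move=> h; rewrite /L /= val_inord. Qed.

Lemma rw_up a c n : 0 < a <= c -> c + n <= m.+2 ->
  rw (ind a c) (T m (iota c n)) = [::] /\ st (ind a c) (T m (iota c n)) = ind a (c + n).
Proof.
elim: n c => [|n IH] c h1 h2; first by rewrite addn0.
rewrite /= /gam fst_L; last (rewrite /rng; lia).
have -> : c.-1.+1 = c by lia.
have -> : ind a c c.+1 = false by rewrite /ind; lia.
have -> : flip (ind a c) c = ind a c.+1.
  apply: functional_extensionality => k; rewrite /flip /ind.
  case: eqP => [->|hk] /=; lia.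
have [-> ->] := IH c.+1 ltac:(lia) ltac:(lia).
by rewrite addSnnS.
Qed.

Lemma rw_down a n : 0 < a -> a + n <= m.+2 ->
  rw (ind a (a + n)) (T m (rev (iota a n))) = [::] /\
  st (ind a (a + n)) (T m (rev (iota a n))) = ind a a.
Proof.
elim: n => [|n IH] h1 h2; first by rewrite addn0.
rewrite -[n.+1]addn1 iotaD rev_cat /= /gam fst_L; last (rewrite /rng; lia).
have -> : (a + n).-1.+1 = a + n by lia.
have -> : ind a (a + (n + 1)) (a + n).+1 = false by rewrite /ind; lia.
have -> : flip (ind a (a + (n + 1))) (a + n) = ind a (a + n).
  apply: functional_extensionality => k; rewrite /flip /ind.
  case: eqP => [->|hk] /=; lia.
by apply: IH; lia.
Qed.

Lemma ind0 a : ind a a = (fun _ => false).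
Proof. apply: functional_extensionality => k; rewrite /ind; apply/negbTE; lia. Qed.

Lemma rl_ind a c S : 0 < a <= c.+1 -> (forall k, k <= c -> S k = ind a c.+1 k) -> rl S c = c.+1 - a.
Proof.
move=> h hS; have [ea|ha'] := eqVneq a c.+1.
  rewrite (rl_ext hS) ea subnn; case: c {h hS ea} => //= c.
  by rewrite /ind ltnn /=.
rewrite (rl_ext hS) (@rl_run _ a.-1 c); first last.
- move=> l hl; rewrite /ind; lia.
- lia.
case ha: a h hS => [//|a'] h hS /=.
case: a' ha h hS => [|a''] ha h hS /=; first lia.
rewrite /ind; have -> : a''.+2 <= a''.+1 = false by lia.
rewrite /=; lia.
Qed.


Ltac evs := rewrite /flip /ind; repeat (case: eqP => ? /=); try lia.

Lemma rwL S k w : rng m k -> rw S (L m k :: w) = gam S (L m k).1 ++ rw (flip S k) w.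
Proof. move=> h /=; rewrite fst_L //; have -> : k.-1.+1 = k by move: h; rewrite /rng; lia. by []. Qed.

Lemma gamL S k : rng m k -> gam S (L m k).1 =
  if S k.+1 then (if gen m (rl S k.-1) k is Some b then [:: (b, S k)] else [::]) else [::].
Proof.
move=> h; rewrite /gam fst_L //; have -> : k.-1.+1 = k by move: h; rewrite /rng; lia. by [].
Qed.

Lemma pos_winv s : pos' (winv (T m s)) = T m (rev s).
Proof.
by rewrite /pos' /winv /T map_rev -!map_comp map_rev.
Qed.

Lemma gen_val p j (b : Bgen m) : val b = (p, j) -> gen m p j = Some b.
Proof.
move=> hb; have := valP b; rewrite hb /= => h.
have [b' [-> hb']] := gen_some h; congr Some; apply: val_inj; by rewrite hb hb'.
Qed.

Lemma stL S k w : rng m k -> st S (L m k :: w) = st (flip S k) w.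
Proof. move=> h /=; rewrite fst_L //; have -> : k.-1.+1 = k by move: h; rewrite /rng; lia. by []. Qed.

Lemma rw0 S k w : rng m k -> S k.+1 = false -> rw S (L m k :: w) = rw (flip S k) w.
Proof. by move=> h h1; rewrite rwL // gamL // h1. Qed.

Lemma rw1 S k w (b : Bgen m) e : rng m k -> S k.+1 = true -> gen m (rl S k.-1) k = Some b ->
  S k = e -> rw S (L m k :: w) = (b, e) :: rw (flip S k) w.
Proof. by move=> h h1 h2 h3; rewrite rwL // gamL // h1 h2 h3. Qed.

Lemma flip4 S i k : flip (flip (flip (flip S i) k) i) k = S.
Proof. by rewrite (flipC (flip S i) k i) !flipK. Qed.

Lemma rw_beta (b : Bgen m) e :
  rw (fun _ => false) (phi [:: (b, e)]) = [:: (b, e)] /\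
  st (fun _ => false) (phi [:: (b, e)]) = (fun _ => false).
Proof.
case hb: (val b) => [p j].
have hb' : sval b = (p, j) := hb.
have := valP b; rewrite hb /= => /andP [hpj hjm].
have hg : gen m p j = Some b by apply: gen_val.
rewrite -(ind0 (j - p)) /phi /= cats0 hb' /=.
have hr : forall S, (forall k, k < j -> S k = ind (j - p) j k) -> rl S j.-1 = p.
  move=> S hS; rewrite (@rl_ind (j - p) j.-1); [lia|lia|].
  move=> k hk; rewrite hS; last lia. by have -> : j.-1.+1 = j by lia.
have rj : rng m j by rewrite /rng; lia.
have rj1 : rng m j.+1 by rewrite /rng; lia.
have [r1 s1] := @rw_up (j - p) (j - p) p ltac:(lia) ltac:(lia).
have ej : j - p + p = j by lia.
rewrite ej in s1.
case: e.
- rewrite -rw_pos -st_pos beta_bseq; last lia.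
  rewrite pos_winv /bsq !rev_cat revK (_ : rev [:: j.+1; j; j.+1; j] = [:: j; j.+1; j; j.+1]) // -catA !T_cat rw_cat st_cat r1 s1 !T_cons.
  rewrite rw0 //; last by evs.
  rewrite rw0 //; last by evs.
  rewrite (@rw1 _ _ _ b true) //; first last.
  + by evs.
  + rewrite (hr _) // => k hk; evs.
  + by evs.
  rewrite rw0 //; last by evs.
  rewrite !stL // flip4 /=.
  have [r2 s2] := @rw_down (j - p) p ltac:(lia) ltac:(lia).
  rewrite ej in r2 s2. by rewrite r2 s2.
- rewrite beta_bseq; last lia.
  rewrite /bsq !T_cat rw_cat st_cat r1 s1 rw_cat st_cat !T_cons.
  rewrite rw0 //; last by evs.
  rewrite (@rw1 _ _ _ b false) //; first last.
  + by evs.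
  + rewrite (hr _) // => k hk; evs.
  + by evs.
  rewrite rw0 //; last by evs.
  rewrite rw0 //; last by evs.
  rewrite !stL // flip4 /=.
  have [r2 s2] := @rw_down (j - p) p ltac:(lia) ltac:(lia).
  rewrite ej in r2 s2. by rewrite r2 s2.
Qed.

End RW2.

Section Cos.
Variable m : nat.
Local Notation "u ≈ v" := (wrel (@TWrel m) u v) (at level 70).
Local Notation "u ≈P v" := (wrel (@Prel m) u v) (at level 70).
Local Notation T := (T m).
Local Notation L := (L m).

Definition S0 : nat -> bool := fun _ => false.

Lemma rw_phi (u : word (Bgen m)) : rw S0 (phi u) = u /\ st S0 (phi u) = S0.
Proof.
elim: u => [|x u [IH1 IH2]] //.
have -> : phi (x :: u) = phi [:: x] ++ phi u by rewrite -phi_cat.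
rewrite rw_cat st_cat; case: x => b e; have [h1 h2] := rw_beta b e.
rewrite /S0 in IH1 IH2 *; by rewrite h1 h2 IH1 IH2.
Qed.

Definition rr (S : nat -> bool) := T [seq k <- iota 1 m.+1 | S k].
Definition supp (S : nat -> bool) := forall k, S k -> 0 < k <= m.+1.

Lemma supp_flip S (x : 'I_m.+1) : supp S -> supp (flip S x.+1).
Proof.
move=> h k; rewrite /flip; case: eqP => [->|hk] /=; first by move=> _; have := ltn_ord x; lia.
exact: h.
Qed.

Lemma supp_st S (w : word 'I_m.+1) : supp S -> supp (st S w).
Proof. by elim: w S => //= a w IH S hS; apply: IH; apply: supp_flip. Qed.

Lemma iota_split3 n M : n < M -> iota 1 M = iota 1 n ++ n.+1 :: iota n.+2 (M - n.+1).
Proof.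
move=> h; have -> : M = n + (M - n.+1).+1 by lia.
rewrite iotaD add1n /=; congr (_ ++ _ :: iota _ _); lia.
Qed.

Lemma rr_split S (x : 'I_m.+1) : supp S ->
  rr S = T [seq k <- iota 1 x | S k] ++ (if S x.+1 then [:: L x.+1] else [::]) ++
         (if S x.+2 then [:: L x.+2] else [::]) ++ T [seq k <- iota x.+3 (m - x).-1 | S k].
Proof.
move=> hS; have hx := ltn_ord x.
rewrite /rr.
rewrite (iota_split3 hx) subSS.
rewrite filter_cat T_cat /=; congr (_ ++ _).
have eB : T [seq k <- iota x.+2 (m - x) | S k] =
   (if S x.+2 then [:: L x.+2] else [::]) ++ T [seq k <- iota x.+3 (m - x).-1 | S k].
  case hmx: (m - x) => [|n] /=.
    have -> : S x.+2 = false by apply/negbTE/negP => /hS; lia.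
    by [].
  by case: (S x.+2).
by case: (S x.+1); rewrite ?T_cons eB.
Qed.


Lemma Lx (x : 'I_m.+1) b : [:: (x,b)] ≈ [:: L x.+1].
Proof. apply: wtr (tw_pos x b) _; rewrite /L /= inord_val; exact: wrel_refl. Qed.

Lemma A_split S x : [seq k <- iota 1 x | S k] =
  [seq k <- iota 1 (x - rl S x) | S k] ++ iota (x.+1 - rl S x) (rl S x).
Proof.
have hl := rl_le S x.
have -> : iota 1 x = iota 1 (x - rl S x) ++ iota (x.+1 - rl S x) (rl S x).
  have {1}-> : x = (x - rl S x) + rl S x by lia.
  by rewrite iotaD; congr (_ ++ iota _ _); lia.
rewrite filter_cat; congr (_ ++ _); apply/all_filterP/allP => k.
rewrite mem_iota => hk; apply: (rl_in (n := x)); lia.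
Qed.

Lemma A'_bound S x k : k \in [seq k <- iota 1 (x - rl S x) | S k] -> k < x - rl S x.
Proof.
rewrite mem_filter mem_iota => /andP [hS hk].
case: (ltngtP k (x - rl S x)) => // [|e]; first lia.
have h : rl S x < x by lia.
by rewrite e (rl_stop h) in hS.
Qed.

Lemma T_step S (x : 'I_m.+1) b : supp S -> rr S ++ [:: (x,b)] ≈ phi (gam S x) ++ rr (flip S x.+1).
Proof.
move=> hS; have hx := ltn_ord x.
have hS' := supp_flip (x:=x) hS.
rewrite (rr_split x hS) (rr_split x hS') flip_eq flip_ne; last lia.
have eA : [seq k <- iota 1 x | flip S x.+1 k] = [seq k <- iota 1 x | S k].
  by apply: eq_in_filter => k; rewrite mem_iota => hk; rewrite flip_ne //; lia.
have eB : [seq k <- iota x.+3 (m - x).-1 | flip S x.+1 k] = [seq k <- iota x.+3 (m - x).-1 | S k].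
  by apply: eq_in_filter => k; rewrite mem_iota => hk; rewrite flip_ne //; lia.
rewrite eA eB.
set Bs := [seq k <- iota x.+3 (m - x).-1 | S k].
have hBr : all (rng m) Bs by rewrite /Bs; sidec.
have hBf : all (far x.+1) Bs by rewrite /Bs; sidec.
have hr1 : rng m x.+1 by rewrite /rng; lia.
rewrite -!catA (Lx x b) -(lfar (k := x.+1) (s := Bs) [::]) // cats0.
case hx2 : (S x.+2); last first.
  rewrite /gam hx2 /phi /=.
  case: (S x.+1) => /=; last by reflexivity.
  by rewrite (sqr x.+1); reflexivity.
have hxm : x.+1 <= m by have := hS _ hx2; lia.
have hl := rl_le S x.
have [g [hg hgv]] := @gen_some m (rl S x) x.+1 ltac:(lia).
rewrite /gam hx2 hg /phi /= hgv /= cats0.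
rewrite A_split.
set p := rl S x.
set A' := [seq k <- iota 1 (x - p) | S k].
have hAr : all (rng m) A' by rewrite /A'; sidec.
have hAf : all (fun k => all (far k) A') (bsq p x.+1).
  apply: allN => k hk; apply: allN => l hl'; have := A'_bound hl'.
  move: hk; rewrite /bsq ?myMemE => hk hl2; rewrite /far; lia.
have hbr : all (rng m) (bsq p x.+1) by rewrite /bsq; sidec.
have hRr : all (rng m) (iota (x.+1 - p) p) by sidec.
have e1 : x.+2 = x.+1.+1 by [].
case hx1 : (S x.+1).
- rewrite beta_bseq; last lia.
  rewrite winv_T /= (@T_cat m A') -!catA (bfar (s := rev (bsq p x.+1)) (t := A')) ?all_rev //.
  rewrite /bsq !rev_cat revK (_ : rev [:: x.+2; x.+1; x.+2; x.+1] = [:: x.+1; x.+2; x.+1; x.+2]) //.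
  rewrite !T_cat -!catA !T_cons /=.
  rewrite (cancr' (iota (x.+1 - p) p)).
  rewrite (sqr x.+2).
  reflexivity.
- rewrite beta_bseq; last lia.
  rewrite /= (@T_cat m A') -!catA (bfar (s := bsq p x.+1) (t := A')) //.
  rewrite /bsq !T_cat -!catA !T_cons /=.
  rewrite (cancr' (iota (x.+1 - p) p)).
  rewrite (sqr x.+1) (sqr x.+2).
  reflexivity.
Qed.

End Cos.


Section Fin.
Variable m : nat.
Local Notation "u ≈ v" := (wrel (@TWrel m) u v) (at level 70).
Local Notation "u ≈P v" := (wrel (@Prel m) u v) (at level 70).
Local Notation T := (T m).
Local Notation L := (L m).

Lemma T_all S (w : word 'I_m.+1) : supp m S -> rr m S ++ w ≈ phi (rw S w) ++ rr m (st S w).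
Proof.
elim: w S => [|a w IH] S hS /=; first by rewrite cats0; reflexivity.
have -> : rr m S ++ a :: w = (rr m S ++ [:: a]) ++ w by rewrite -catA.
case: a => x b /=.
rewrite (T_step x b hS) -catA (IH _ (supp_flip (x:=x) hS)) phi_cat catA.
reflexivity.
Qed.

Lemma stE S (w : word 'I_m.+1) k :
  st S w k = S k (+) odd (count (fun a : 'I_m.+1 * bool => a.1.+1 == k) w).
Proof.
elim: w S => [|a w IH] S /=; first by rewrite addbF.
rewrite IH /flip oddD.
case: (eqVneq k a.1.+1) => [->|ne].
  by rewrite /=; case: (S _); case: (odd _).
by rewrite /=; case: (S _); case: (odd _).
Qed.

Lemma count_winv (P : pred ('I_m.+1 * bool)) (w : word 'I_m.+1) :
  (forall x b, P (x, b) = P (x, ~~ b)) -> count P (winv w) = count P w.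
Proof.
move=> hP; rewrite /winv count_rev count_map; apply: eq_count => -[x b] /=.
by rewrite -hP.
Qed.

Lemma st_comm S (g h : word 'I_m.+1) : st S (wcomm g h) = S.
Proof.
apply: functional_extensionality => k; rewrite stE /wcomm !count_cat !count_winv //.
by rewrite addnA addnC !addnA -addnA addnn odd_double addbF.
Qed.

Lemma st_flat S (cs : seq (word 'I_m.+1 * word 'I_m.+1)) :
  st S (flatten [seq wcomm c.1 c.2 | c <- cs]) = S.
Proof. by elim: cs S => //= c cs IH S; rewrite st_cat st_comm IH. Qed.

Lemma rr_S0 : rr m (S0) = [::].
Proof. by rewrite /rr /S0; elim: (iota 1 m.+1). Qed.

Lemma winv_wcomm (g h : word 'I_m.+1) : winv (wcomm g h) = wcomm h g.
Proof. by rewrite /wcomm !winv_cat !winvK -!catA. Qed.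

Definition GG (p j : nat) := T (iota (j - p) p ++ j.+1 :: rev (iota (j - p) p)).
Definition HH (p j : nat) := T (iota (j - p) p ++ j :: rev (iota (j - p) p)).

Lemma winv_sym R k : winv (T (R ++ k :: rev R)) ≈ T (R ++ k :: rev R).
Proof. by rewrite winv_T rev_cat /= rev_cons revK -cats1 -catA; reflexivity. Qed.

Lemma beta_wcomm p j : p <= j -> beta m p j ≈ wcomm (GG p j) (HH p j).
Proof.
move=> hp; rewrite /wcomm /GG /HH !winv_sym beta_T //.
set R := iota (j - p) p.
rewrite !T_cat -!catA /= (cancr' R) (cancr' R) (cancr' R).
reflexivity.
Qed.

Lemma phi1 (b : Bgen m) e : phi [:: (b, e)] ≈
   (if e then wcomm (HH (val b).1 (val b).2) (GG (val b).1 (val b).2)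
    else wcomm (GG (val b).1 (val b).2) (HH (val b).1 (val b).2)).
Proof.
case: b => [[p j] hpj]; have /andP [h1 h2] : (p < j) && (j <= m) := hpj.
rewrite /phi /= cats0; case: e.
- rewrite -winv_wcomm; apply: winv_wrel; apply: beta_wcomm; lia.
- apply: beta_wcomm; lia.
Qed.

End Fin.

Theorem theorem1p1 (m : nat) (hm : 1 <= m) :
  (forall u v : word (Bgen m),
      wrel (@Prel m) u v -> wrel (@TWrel m) (phi u) (phi v)) /\
  (forall u v : word (Bgen m),
      wrel (@TWrel m) (phi u) (phi v) -> wrel (@Prel m) u v) /\
  (forall w : word 'I_m.+1,
      in_commTW w <-> exists u : word (Bgen m), wrel (@TWrel m) (phi u) w).
Proof.
split; first exact: part1.
split.
  move=> u v /L2 [h _]; have := h S0.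
  by have [-> _] := rw_phi u; have [-> _] := rw_phi v.
move=> w; split.
- move=> [cs hcs]; exists (rw S0 w).
  have [_ h2] := L2 hcs.
  have hst : st S0 w = S0 by rewrite h2 st_flat.
  have := T_all w (S := S0) (fun k (h : S0 k) => ltac:(done)).
  rewrite hst rr_S0 cats0 /= => h; exact: wsym.
- move=> [u hu].
  exists [seq (if x.2 then (HH m (val x.1).1 (val x.1).2, GG m (val x.1).1 (val x.1).2)
               else (GG m (val x.1).1 (val x.1).2, HH m (val x.1).1 (val x.1).2)) | x <- u].
  apply: wtr (wsym hu) _.
  elim: u {hu} => [|[b e] u IH] /=; first exact: wrel_refl.
  have -> : phi ((b, e) :: u) = phi [:: (b, e)] ++ phi u by rewrite -phi_cat.
  apply: wcat; last exact: IH.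
  by rewrite phi1; case: e; reflexivity.
Qed.
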